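(* Let $(S,\mathit{Act},P,\mu)$ be an MDP with a bounded measurable reward $r$ (specified below), let $\pi$ be any stationary policy, and let $\gamma\in(0,1)$. Let $I\subseteq S$ be measurable and let $A,B\subseteq S$ be measurable. Write $U:=B\cup \mathrm{Abs}_\pi\big((A\cup B)^c\big)$ (assumed measurable). Assume: 1. (Invariant) $I$ is absorbing under $\pi$ and $\mu(I)=1$. 2. (Almost-sure reachability) For all $s\in I$, $\Pr_\pi(\tau_U<\infty\mid S_0=s)=1$. 3. (Uniform bound on hitting time) There is a constant $\bar H<\infty$ such that for all $s\in (A\setminus B)\cap I$, $\mathbb{E}_\pi[\tau_U\mid S_0=s]\le \bar H$. 4. (Reward) $r(s,a,s')=\mathbf 1_{\{s\in U\}}$ for all $s,a,s'$. Then the function $W:I\to\mathbb{R}$, $W(s):=C-V^\pi(s)$ with $C:=\frac{1}{1-\gamma}$, is a Streett supermartingale for $(A,B)$ under $\pi$ with supporting invariant $I$.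
   Context: State space $S$ and action space $\mathit{Act}$ are each finite or countable (discrete $\sigma$-algebra) or Borel subsets of a Euclidean space (Borel $\sigma$-algebra). An MDP $(S,\mathit{Act},P,\mu)$ consists of a stochastic kernel $P(\cdot\mid s,a)$ on $S$ given $S\times\mathit{Act}$ and an initial distribution $\mu$ on $S$. A stationary policy $\pi$ is a stochastic kernel $\pi(\cdot\mid s)$ on $\mathit{Act}$ given $S$. For $s\in S$, $\Pr_\pi(\cdot\mid S_0=s)$ and $\mathbb{E}_\pi[\cdot\mid S_0=s]$ denote probability and expectation for the process $(S_t,A_t)_{t\ge0}$ with $S_0=s$, $A_t\sim\pi(\cdot\mid S_t)$, $S_{t+1}\sim P(\cdot\mid S_t,A_t)$. Given a measurable reward $r:S\times\mathit{Act}\times S\to\mathbb{R}$ and $\gamma\in(0,1)$, the value function is $V^\pi(s)=\mathbb{E}_\pi\big[\sum_{t\ge0}\gamma^t r(S_t,A_t,S_{t+1})\mid S_0=s\big]$. A measurable set $X\subseteq S$ is absorbing under $\pi$ if $\Pr_\pi(S_1\in X\mid S_0=s)=1$ for all $s\in X$. For measurable $X$, $\mathrm{Abs}_\pi(X):=\{s\in S:\Pr_\pi(\forall t\ge0:\ S_t\in X\mid S_0=s)=1\}$ (largest absorbing subset). The first hitting time of a measurable $U$ is $\tau_U:=\inf\{t\ge0:S_t\in U\}$ (with $\inf\emptyset=\infty$). Streett supermartingale: given measurable $A,B,I\subseteq S$, a function $W:I\to[0,\infty)$ is a Streett supermartingale for $(A,B)$ under $\pi$ with supporting invariant $I$ if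 (i) $\mu(I)=1$; (ii) $\Pr_\pi(S_1\in I\mid S_0=s)=1$ for all $s\in I$; (iii) there is a constant $\varepsilon>0$ with $\mathbb{E}_\pi[W(S_1)\mid S_0=s]\le W(s)-\varepsilon$ for all $s\in (A\setminus B)\cap I$; (iv) $\mathbb{E}_\pi[W(S_1)\mid S_0=s]\le W(s)$ for all $s\in I\setminus(A\cup B)$. *)

(* Defs.v *)
From HB Require Import structures.
From mathcomp Require Import all_boot all_order all_algebra.
From mathcomp Require Import all_classical all_reals.
From mathcomp Require Import ereal topology normedtype sequences esum measure.
From mathcomp Require Import lebesgue_measure lebesgue_integral numfun probability kernel.

Set Implicit Arguments.
Unset Strict Implicit.
Unset Printing Implicit Defensive.

Import Order.TTheory GRing.Theory Num.Theory.
Local Open Scope classical_set_scope.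
Local Open Scope ring_scope.
Local Open Scope ereal_scope.

(* All path quantities used in the statement are events /
   expectations that are determined by finite-dimensional marginals; we define
   them honestly via iterated integrals against the one-step kernel
   s |-> \int[pi s]_a P (s, a) (.) and monotone limits over the horizon. *)

Section MDP.
Context {R : realType} {dS dA : measure_display}
  {S : measurableType dS} {Act : measurableType dA}.
Variables (P : R.-pker (S * Act) ~> S) (pi : R.-pker S ~> Act).

Definition stepE (D : set S) (f : S -> \bar R) (s : S) : \bar R :=
  \int[pi s]_a \int[P (s, a)]_(y in D) f y.

Definition Pr1 (X : set S) (s : S) : \bar R := \int[pi s]_a P (s, a) X.

(* survive X n s = Pr_pi(S_0, ..., S_n all in X | S_0 = s) *)
Fixpoint survive (X : set S) (n : nat) (s : S) : \bar R :=
  match n with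
  | 0 => (\1_X s)%:E
  | m.+1 => (\1_X s)%:E * stepE setT (survive X m) s
  end.

Definition Pr_always (X : set S) (s : S) : \bar R := limn (fun n => survive X n s).

Definition Abs (X : set S) : set S := [set s | Pr_always X s = 1].

(* hit U n s = Pr_pi(tau_U <= n | S_0 = s) *)
Fixpoint hit (U : set S) (n : nat) (s : S) : \bar R :=
  match n with
  | 0 => (\1_U s)%:E
  | m.+1 => (\1_U s)%:E + (\1_(~` U) s)%:E * stepE setT (hit U m) s
  end.

Definition Pr_hit_finite (U : set S) (s : S) : \bar R := limn (fun n => hit U n s).

(* E_pi[tau_U | S_0 = s] = \sum_{n >= 0} Pr_pi(tau_U > n | S_0 = s),
   where {tau_U > n} = {S_0, ..., S_n not in U} (value +oo allowed) *)
Definition E_hittime (U : set S) (s : S) : \bar R :=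
  \sum_(0 <= n <oo) survive (~` U) n s.

Fixpoint iterE (t : nat) (f : S -> \bar R) (s : S) : \bar R :=
  match t with
  | 0 => f s
  | m.+1 => stepE setT (iterE m f) s
  end.

Definition one_step_reward (r : S * Act * S -> R) (x : S) : \bar R :=
  \int[pi x]_a \int[P (x, a)]_y (r (x, a, y))%:E.

Definition value (r : S * Act * S -> R) (gamma : R) (s : S) : \bar R :=
  \sum_(0 <= t <oo) ((gamma ^+ t)%:E * iterE t (one_step_reward r) s).

(* Streett supermartingale W (a function I -> [0, oo), represented as a
   function on S whose values outside I are irrelevant) *)
Definition streett_supermartingale (mu : probability S R)
    (A B I : set S) (W : S -> R) : Prop :=
  [/\ (forall s, I s -> (0 <= W s)%R),
      mu I = 1,
      (forall s, I s -> Pr1 I s = 1),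
      (exists eps : R, (0 < eps)%R /\
         forall s, ((A `\` B) `&` I) s ->
           stepE I (fun y => (W y)%:E) s <= (W s - eps)%:E) &
      (forall s, (I `\` (A `|` B)) s ->
           stepE I (fun y => (W y)%:E) s <= (W s)%:E)].

End MDP.

(* Main.v *)
Require Import Defs.
From HB Require Import structures.
From mathcomp Require Import all_boot all_order all_algebra.
From mathcomp Require Import all_classical all_reals.
From mathcomp Require Import ereal topology normedtype sequences esum measure.
From mathcomp Require Import lebesgue_measure lebesgue_integral numfun probability kernel.
From mathcomp Require Import measurable_realfun.
From mathcomp Require Import lra.

Import Order.TTheory GRing.Theory Num.Theory.
Local Open Scope classical_set_scope.
Local Open Scope ring_scope.
Local Open Scope ereal_scope.

Section S1.
Context {R : realType} {dS dA : measure_display}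
  {S : measurableType dS} {Act : measurableType dA}.
Context (P : R.-pker (S * Act) ~> S) (pi : R.-pker S ~> Act).

Definition M := (pi \; P).
Definition T (f : S -> \bar R) (s : S) : \bar R := \int[M s]_y f y.

Lemma M_setT s : M s setT = 1.
Proof.
rewrite /M /= /kcomp.
under eq_integral do rewrite prob_kernel.
by rewrite integral_cst // prob_kernel mule1.
Qed.

Lemma stepE_T (f : S -> \bar R) s : (forall y, 0 <= f y) -> measurable_fun setT f ->
  stepE P pi setT f s = T f s.
Proof. by move=> f0 mf; rewrite /stepE /T /M /= integral_kcomp. Qed.

Lemma T_meas (f : S -> \bar R) : (forall y, 0 <= f y) -> measurable_fun setT f ->
  measurable_fun setT (T f).
Proof.
move=> f0 mf; apply: (measurable_fun_integral_kernel (l := M)) => //.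
by move=> U mU; exact: (measurable_kernel (pi \; P)).
Qed.

Lemma T_cst c s : T (fun=> c) s = c.
Proof. by rewrite /T integral_cst // M_setT mule1. Qed.

Lemma T_ge0 (f : S -> \bar R) s : (forall y, 0 <= f y) -> 0 <= T f s.
Proof. by move=> f0; apply: integral_ge0 => y _. Qed.

Lemma T_le (f g : S -> \bar R) s : (forall y, 0 <= f y) -> measurable_fun setT f ->
  measurable_fun setT g -> (forall y, f y <= g y) -> T f s <= T g s.
Proof. by move=> f0 mf mg fg; apply: ge0_le_integral => // y _. Qed.

Lemma T_add (f g : S -> \bar R) s : (forall y, 0 <= f y) -> measurable_fun setT f ->
  (forall y, 0 <= g y) -> measurable_fun setT g ->
  T (fun y => f y + g y) s = T f s + T g s.
Proof. by move=> f0 mf g0 mg; rewrite /T ge0_integralD // => y _. Qed.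

Lemma T_scale (k : \bar R) (f : S -> \bar R) s : 0 <= k -> (forall y, 0 <= f y) -> measurable_fun setT f ->
  T (fun y => k * f y) s = k * T f s.
Proof. by move=> k0 f0 mf; rewrite /T ge0_integralZl // => y _. Qed.

Lemma T_series (f : nat -> S -> \bar R) s : (forall n y, 0 <= f n y) ->
  (forall n, measurable_fun setT (f n)) ->
  T (fun y => \sum_(0 <= n <oo) f n y) s = \sum_(0 <= n <oo) T (f n) s.
Proof. by move=> f0 mf; rewrite /T integral_nneseries // => n y _. Qed.


Lemma geo (γ : R) : (0 <= γ < 1)%R ->
  \sum_(0 <= t <oo) ((γ ^+ t)%:E) = ((1 - γ)^-1)%:E.
Proof.
move=> /andP[g0 g1].
rewrite (_ : (fun n => _) = EFin \o series (geometric 1 γ)); last first.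
  apply/funext => n /=; rewrite /series /= sumEFin; congr (_%:E).
  by apply: eq_bigr => i _; rewrite mul1r.
have ag : (`|γ| < 1)%R by rewrite ger0_norm.
have h := cvg_geometric_series (a:=1) ag.
apply: cvg_lim => //; rewrite -div1r; exact: (cvg_comp _ _ h).
Qed.

Lemma ind01 (U : set S) y : 0 <= (\1_U y : R)%:E <= 1.
Proof. by rewrite !lee_fin indicE; case: (y \in U) => /=; rewrite ?ler01 ?lexx. Qed.

Lemma ind_meas (U : set S) : measurable U -> measurable_fun setT (fun y => (\1_U y : R)%:E).
Proof. by move=> mU; apply/measurable_EFinP; exact: measurable_indic. Qed.

Lemma iterS (f : S -> \bar R) t s :
  (forall t y, 0 <= iterE P pi t f y) -> (forall t, measurable_fun setT (iterE P pi t f)) ->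
  iterE P pi t.+1 f s = T (iterE P pi t f) s.
Proof. by move=> h1 h2; rewrite /= stepE_T. Qed.

Lemma iter_prop (f : S -> \bar R) : (forall y, 0 <= f y <= 1) -> measurable_fun setT f ->
  forall t, measurable_fun setT (iterE P pi t f) /\ forall y, 0 <= iterE P pi t f y <= 1.
Proof.
move=> f01 mf; elim=> [|t [IHm IHb]] //=.
have e : stepE P pi setT (iterE P pi t f) = T (iterE P pi t f).
  by apply/funext => y; rewrite stepE_T // => z; case/andP: (IHb z).
rewrite e; split.
  by apply: T_meas => // z; case/andP: (IHb z).
move=> y; rewrite T_ge0 /=; last by move=> z; case/andP: (IHb z).
rewrite -(T_cst 1 y); apply: T_le => //.
- by move=> z; case/andP: (IHb z).
- by move=> z; case/andP: (IHb z).
Qed.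


Definition gU (U : set S) := fun y => (\1_U y : R)%:E.

Lemma osr_eq (r : S * Act * S -> R) (U : set S) :
  (forall s a s', r (s, a, s') = \1_U s) -> one_step_reward P pi r = gU U.
Proof.
move=> hr; apply/funext => x; rewrite /one_step_reward.
under eq_integral => a _ do
  (under eq_integral => y _ do rewrite hr; rewrite integral_cst // prob_kernel mule1).
by rewrite integral_cst // prob_kernel mule1.
Qed.

Definition V (γ : R) (U : set S) s :=
  \sum_(0 <= t <oo) ((γ ^+ t)%:E * iterE P pi t (gU U) s).

Lemma gU01 U : forall y, 0 <= gU U y <= 1.
Proof. by move=> y; exact: ind01. Qed.

Lemma itg_ge0 {U} (mU : measurable U) t y : 0 <= iterE P pi t (gU U) y.
Proof. by case: (@iter_prop (gU U) (gU01 U) (@ind_meas U mU) t) => _ h; case/andP: (h y). Qed.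

Lemma itg_le1 {U} (mU : measurable U) t y : iterE P pi t (gU U) y <= 1.
Proof. by case: (@iter_prop (gU U) (gU01 U) (@ind_meas U mU) t) => _ h; case/andP: (h y). Qed.

Lemma itg_meas {U} (mU : measurable U) t : measurable_fun setT (iterE P pi t (gU U)).
Proof. by case: (@iter_prop (gU U) (gU01 U) (@ind_meas U mU) t). Qed.

Lemma V_ge0 γ {U} (mU : measurable U) s : (0 <= γ)%R -> 0 <= V γ U s.
Proof.
move=> g0; apply: nneseries_ge0 => n _ _; apply: mule_ge0; last exact: itg_ge0.
by rewrite lee_fin exprn_ge0.
Qed.

Lemma V_le γ {U} (mU : measurable U) s : (0 <= γ < 1)%R -> V γ U s <= ((1 - γ)^-1)%:E.
Proof.
move=> /[dup] hg /andP[g0 g1]; rewrite -geo //.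
apply: lee_nneseries => n.
  move=> _ _; apply: mule_ge0; last exact: itg_ge0.
  by rewrite lee_fin exprn_ge0.
move=> _; rewrite -[leRHS]mule1; apply: lee_wpmul2l; last exact: itg_le1.
by rewrite lee_fin exprn_ge0.
Qed.

Lemma V_meas γ {U} (mU : measurable U) : (0 <= γ)%R -> measurable_fun setT (V γ U).
Proof.
move=> g0; apply: (ge0_emeasurable_sum (P := xpredT)).
  move=> k x _ _; apply: mule_ge0; last exact: itg_ge0.
  by rewrite lee_fin exprn_ge0.
by move=> k _; apply: measurable_funeM; exact: itg_meas.
Qed.

Lemma V_eq γ {U} (mU : measurable U) s : (0 <= γ)%R ->
  V γ U s = gU U s + γ%:E * T (V γ U) s.
Proof.
move=> g0.
have tge0 : forall n y, 0 <= (γ ^+ n)%:E * iterE P pi n (gU U) y.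
  by move=> n y; apply: mule_ge0; [rewrite lee_fin exprn_ge0|exact: itg_ge0].
rewrite /V T_series //; last by move=> n; apply: measurable_funeM; exact: itg_meas.
rewrite [LHS]nneseries_recl //=.
rewrite expr0 mul1e; congr (_ + _).
rewrite -[LHS]nneseries_addn //; try by move=> i; exact: tge0.
rewrite -nneseriesZl //; last first.
  by move=> i _; apply: T_ge0 => y; exact: tge0.
apply: eq_eseriesr => i _.
rewrite T_scale //; last exact: itg_meas.
- rewrite -iterS; [by rewrite addn1 exprS EFinM muleA| |].
  + by move=> *; exact: itg_ge0.
  + by move=> *; exact: itg_meas.
- by rewrite lee_fin exprn_ge0.
- by move=> *; exact: itg_ge0.
Qed.


Lemma gU_in {U y} : U y -> gU U y = 1.
Proof. by move=> h; rewrite /gU indicE mem_set. Qed.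

Lemma gU_out {U y} : ~ U y -> gU U y = 0.
Proof. by move=> h; rewrite /gU indicE memNset. Qed.

Lemma gU_meas U : measurable U -> measurable_fun setT (gU U).
Proof. exact: ind_meas. Qed.

Lemma T_sumn (f : nat -> S -> \bar R) s n : (forall n y, 0 <= f n y) ->
  (forall n, measurable_fun setT (f n)) ->
  T (fun y => \sum_(0 <= i < n) f i y) s = \sum_(0 <= i < n) T (f i) s.
Proof.
move=> f0 mf; elim: n => [|n IH].
  by rewrite big_geq //; under eq_fun do rewrite big_geq //; rewrite T_cst.
rewrite big_nat_recr //=; under eq_fun do rewrite big_nat_recr //=.
rewrite T_add ?IH //.
- by move=> y; apply: sume_ge0 => i _; exact: f0.
- exact: emeasurable_sum.
Qed.

Lemma surv_prop {X} (mX : measurable X) n :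
  measurable_fun setT (survive P pi X n) /\ forall y, 0 <= survive P pi X n y <= 1.
Proof.
elim: n => [|n [IHm IHb]].
  split; [apply/measurable_EFinP; exact: measurable_indic| move=> y; exact: ind01].
have e : survive P pi X n.+1 = fun s => gU X s * T (survive P pi X n) s.
  apply/funext => s /=; rewrite stepE_T //.
  by move=> y; case/andP: (IHb y).
rewrite e; split.
  apply: emeasurable_funM; first exact: gU_meas.
  by apply: T_meas => // y; case/andP: (IHb y).
move=> y; have /andP[g0 g1] := gU01 X y.
have t0 : 0 <= T (survive P pi X n) y by apply: T_ge0 => z; case/andP: (IHb z).
have t1 : T (survive P pi X n) y <= 1.
  rewrite -(T_cst 1 y); apply: T_le => // z; by case/andP: (IHb z).
by rewrite mule_ge0 //= -(mule1 1) lee_pmul.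
Qed.

Lemma survS {X} (mX : measurable X) n s :
  survive P pi X n.+1 s = gU X s * T (survive P pi X n) s.
Proof.
have [m b] := surv_prop mX n.
by rewrite /= stepE_T // => y; case/andP: (b y).
Qed.

Lemma surv_ge0 {X} (mX : measurable X) n s : 0 <= survive P pi X n s.
Proof. by have [_ b] := surv_prop mX n; case/andP: (b s). Qed.

Lemma surv_le1 {X} (mX : measurable X) n s : survive P pi X n s <= 1.
Proof. by have [_ b] := surv_prop mX n; case/andP: (b s). Qed.

Lemma surv_meas {X} (mX : measurable X) n : measurable_fun setT (survive P pi X n).
Proof. by have [m _] := surv_prop mX n. Qed.

Lemma surv_mono {X} (mX : measurable X) n s : survive P pi X n.+1 s <= survive P pi X n s.
Proof.
elim: n s => [|n IH] s.
  rewrite survS // -[leRHS]mule1; apply: lee_wpmul2l; first by case/andP: (gU01 X s).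
  rewrite -(T_cst 1 s); apply: T_le.
  - by move=> y; exact: surv_ge0.
  - exact: surv_meas.
  - exact: measurable_cst.
  - by move=> y; exact: surv_le1.
rewrite survS // [leRHS]survS //; apply: lee_wpmul2l; first by case/andP: (gU01 X s).
apply: T_le.
- by move=> y; exact: surv_ge0.
- exact: surv_meas.
- exact: surv_meas.
- by move=> y; exact: IH.
Qed.

Lemma surv_anti {X} (mX : measurable X) m n s : (m <= n)%N ->
  survive P pi X n s <= survive P pi X m s.
Proof.
elim: n => [|n IH]; first by rewrite leqn0 => /eqP ->.
rewrite leq_eqVlt => /orP[/eqP -> //|]; rewrite ltnS => /IH h.
exact: le_trans (surv_mono mX n s) h.
Qed.

Lemma hit_prop {U} (mU : measurable U) n :
  [/\ measurable_fun setT (hit P pi U n), forall y, 0 <= hit P pi U n y &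
      forall y, hit P pi U n y + survive P pi (~` U) n y = 1].
Proof.
have mC : measurable (~` U) by exact: measurableC.
elim: n => [|n [IHm IH0 IH1]].
  split; [exact: gU_meas| by move=> y; case/andP: (gU01 U y)|].
  move=> y; change (gU U y + gU (~` U) y = 1); case: (pselect (U y)) => h.
    by rewrite (gU_in h) (@gU_out (~` U) y (fun c => c h)) adde0.
  by rewrite (gU_out h) (@gU_in (~` U) y h) add0e.
have e : hit P pi U n.+1 = fun s => gU U s + gU (~` U) s * T (hit P pi U n) s.
  by apply/funext => s /=; rewrite stepE_T.
rewrite e; split.
- apply: emeasurable_funD; first exact: gU_meas.
  apply: emeasurable_funM; first exact: gU_meas.
  exact: T_meas.
- move=> y; apply: adde_ge0; first by case/andP: (gU01 U y).
  by apply: mule_ge0; [case/andP: (gU01 (~` U) y)| exact: T_ge0].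
- move=> y.
  have f1 : gU (~` U) y \is a fin_num by rewrite /gU.
  have f2 : (T (hit P pi U n) y) +? (T (survive P pi (~` U) n) y).
    by rewrite ge0_adde_def // inE; apply: T_ge0 => // z; exact: surv_ge0.
  rewrite survS // -addeA -muleDr //.
  rewrite -T_add //; last exact: surv_meas.

  2: by move=> z; exact: surv_ge0.
  under eq_fun do rewrite IH1.
  rewrite T_cst mule1; case: (pselect (U y)) => h.
    by rewrite (gU_in h) (@gU_out (~` U) y (fun c => c h)) adde0.
  by rewrite (gU_out h) (@gU_in (~` U) y h) add0e.
Qed.


Lemma surv_fin {X} (mX : measurable X) n y : survive P pi X n y \is a fin_num.
Proof.
by rewrite ge0_fin_numE ?surv_ge0 // (le_lt_trans (surv_le1 mX n y)) // ltey.
Qed.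

Lemma hit_le_sum {U} (mU : measurable U) n s :
  hit P pi U n s <= \sum_(0 <= t < n.+1) iterE P pi t (gU U) s.
Proof.
elim: n s => [|n IH] s; first by rewrite big_nat1.
have [hm h0 _] := hit_prop mU n.
rewrite /= stepE_T // big_nat_recl //=.
apply: leeD; first exact: lexx.
apply: (@le_trans _ _ (T (hit P pi U n) s)).
  rewrite -[leRHS]mul1e; apply: lee_wpmul2r; first exact: T_ge0.
  by case/andP: (gU01 (~` U) s).
apply: (@le_trans _ _ (T (fun y => \sum_(0 <= t < n.+1) iterE P pi t (gU U) y) s)).
  apply: T_le => //.
  by apply: emeasurable_sum => i; exact: itg_meas.
rewrite T_sumn //; last by move=> i; exact: itg_meas.
  apply: lee_sum => i _; rewrite /= stepE_T //.
    by move=> *; exact: itg_ge0.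
  by move=> *; exact: itg_meas.
by move=> *; exact: itg_ge0.
Qed.

Lemma V_ge_hit γ {U} (mU : measurable U) N s : (0 <= γ <= 1)%R ->
  (γ ^+ N)%:E * hit P pi U N s <= V γ U s.
Proof.
move=> /andP[g0 g1].
apply: (@le_trans _ _ ((γ ^+ N)%:E * \sum_(0 <= t < N.+1) iterE P pi t (gU U) s)).
  apply: lee_wpmul2l; first by rewrite lee_fin exprn_ge0.
  exact: hit_le_sum.
rewrite ge0_sume_distrr; last by move=> *; exact: itg_ge0.
have h := @nneseries_lim_ge R (fun t => (γ ^+ t)%:E * iterE P pi t (gU U) s) xpredT 0 N.+1.
apply: le_trans (h _); last first.
  move=> n _ _; apply: mule_ge0; [by rewrite lee_fin exprn_ge0|exact: itg_ge0].
rewrite big_nat_cond [leRHS]big_nat_cond; apply: lee_sum => i /andP[/andP[_ hi] _].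
apply: lee_wpmul2r; first exact: itg_ge0.
by rewrite lee_fin; apply: ler_wiXn2l.
Qed.

Lemma Pr_always_inf {X} (mX : measurable X) s :
  Pr_always P pi X s = ereal_inf (range (fun n => survive P pi X n s)).
Proof.
apply: cvg_lim => //; apply: ereal_nonincreasing_cvgn => m n mn; exact: surv_anti.
Qed.

Lemma AbsP {X} (mX : measurable X) s :
  Abs P pi X s <-> forall n, survive P pi X n s = 1.
Proof.
rewrite /Abs /= Pr_always_inf //; split.
  move=> h n; apply/le_anti; rewrite surv_le1 //= -{1}h.
  by apply: ereal_inf_lbound; exists n.
move=> h; apply/le_anti/andP; split.
  by apply: ge_ereal_inf; exists 1 => //; exists 0%N.
by apply/ereal_infP => y [n _ <-]; rewrite h.
Qed.

Lemma Abs_meas {X} (mX : measurable X) : measurable (Abs P pi X).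
Proof.
have -> : Abs P pi X = \bigcap_n (survive P pi X n @^-1` [set 1]).
  apply/seteqP; split => s.
    by move/(AbsP mX) => h n _ /=; exact: h n.
  by move=> h; apply/(AbsP mX) => n; exact: h n I.
apply: bigcapT_measurable => n; rewrite -[X in measurable X]setTI.
exact: (surv_meas mX n).
Qed.

Lemma T_surv_one {X} (mX : measurable X) n s : Abs P pi X s ->
  T (survive P pi X n) s = 1.
Proof.
move/(AbsP mX) => h; have := h n.+1; rewrite survS //.
case: (pselect (X s)) => xs; first by rewrite gU_in // mul1e.
rewrite gU_out // mul0e => e.
by have := @lte01 R; rewrite -e ltxx.
Qed.


Lemma T_Abs {X} (mX : measurable X) s : Abs P pi X s ->
  T (gU (Abs P pi X)) s = 1.
Proof.
move=> hs.
set A' := Abs P pi X; have mA' : measurable A' := Abs_meas mX.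
have d0 : forall n y, 0 <= 1 - survive P pi X n y.
  by move=> n y; rewrite sube_ge0 ?surv_le1 ?surv_fin ?orbT.
have dm : forall n, measurable_fun setT (fun y => 1 - survive P pi X n y).
  by move=> n; apply: emeasurable_funB => //; exact: surv_meas.
have Td : forall n, T (fun y => 1 - survive P pi X n y) s = 0.
  move=> n.
  have e := T_add _ _ s (d0 n) (dm n) (surv_ge0 mX n) (surv_meas mX n).
  rewrite (_ : (fun y => 1 - survive P pi X n y + survive P pi X n y) = fun=> 1) in e.
    rewrite T_cst T_surv_one // in e.
    have fT : T (fun y => 1 - survive P pi X n y) s \is a fin_num.
      rewrite ge0_fin_numE; last exact: T_ge0.
      apply: (@le_lt_trans _ _ 1); last exact: ltey.
      rewrite -[leRHS](T_cst 1 s); apply: T_le => // y /=.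
      by rewrite -[leRHS]sube0; apply: leeB => //; exact: surv_ge0.
    move/(congr1 (fun x => x - 1)): e; rewrite addeK // subee // => <- //.
  by apply/funext => y; rewrite subeK // surv_fin.
pose phi y := \sum_(0 <= n <oo) (+oo * (1 - survive P pi X n y)).
have mphi : measurable_fun setT phi.
  apply: (ge0_emeasurable_sum (P := xpredT)).
    by move=> k x _ _; apply: mule_ge0 => //; exact: d0.
  by move=> k _; apply: measurable_funeM; exact: dm.
have Tphi : T phi s = 0.
  rewrite /phi T_series; last by move=> n; apply: measurable_funeM; exact: dm.
    by rewrite eseries0 // => i _ _; rewrite (T_scale _ _ s _ (d0 i) (dm i)) ?Td ?mule0.
  by move=> n y; apply: mule_ge0 => //; exact: d0.
have le : forall y, gU (~` A') y <= phi y.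
  move=> y; case: (pselect (A' y)) => hy.
    rewrite gU_out /=; last by move=> /(_ hy).
    by apply: nneseries_ge0 => n _ _; apply: mule_ge0 => //; exact: d0.
  case: (pselect (exists n, survive P pi X n y != 1)) => [[n hn]|hn]; last first.
    exfalso; apply: hy; apply/(AbsP mX) => n; apply/eqP/negPn/negP => c.
    by apply: hn; exists n.
  rewrite /phi (@nneseries_pinfty _ _ xpredT n) ?leey //.
    by move=> m _; apply: mule_ge0 => //; exact: d0.
  apply: gt0_mulye; rewrite sube_gt0 lt_neqAle hn surv_le1 //.
have TC : T (gU (~` A')) s = 0.
  apply/le_anti; rewrite T_ge0 ?andbT; last by move=> y; case/andP: (gU01 (~` A') y).
  rewrite -Tphi; apply: T_le => //.
  - by move=> y; case/andP: (gU01 (~` A') y).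
  - by apply: gU_meas; exact: measurableC.
have sum1 : T (gU A') s + T (gU (~` A')) s = 1.
  rewrite -T_add.
  - rewrite (_ : (fun y => gU A' y + gU (~` A') y) = fun=> 1) ?T_cst //.
    apply/funext => y; case: (pselect (A' y)) => h.
      by rewrite (gU_in h) (@gU_out (~` A') y (fun c => c h)) adde0.
    by rewrite (gU_out h) (@gU_in (~` A') y h) add0e.
  - by move=> y; case/andP: (gU01 A' y).
  - exact: gU_meas.
  - by move=> y; case/andP: (gU01 (~` A') y).
  - by apply: gU_meas; exact: measurableC.
by move: sum1; rewrite TC adde0.
Qed.

Lemma iter_Abs {X U} (mX : measurable X) (mU : measurable U) :
  Abs P pi X `<=` U -> forall t s, Abs P pi X s -> iterE P pi t (gU U) s = 1.
Proof.
move=> sub; elim=> [|t IH] s hs; first by rewrite /= gU_in //; exact: sub.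
rewrite iterS; last 2 first.
- by move=> *; exact: itg_ge0.
- by move=> *; exact: itg_meas.
apply/le_anti/andP; split.
  rewrite -(T_cst 1 s); apply: T_le => //; first exact: itg_ge0.
  - exact: itg_meas.
  - by move=> y; exact: itg_le1.
rewrite -(@T_Abs X mX s hs); apply: T_le.
- by move=> y; case/andP: (gU01 (Abs P pi X) y).
- exact/gU_meas/Abs_meas.
- exact: itg_meas.
move=> y; case: (pselect (Abs P pi X y)) => hy.
  by rewrite gU_in // IH.
by rewrite gU_out //; exact: itg_ge0.
Qed.

Lemma V_Abs γ {X U} (mX : measurable X) (mU : measurable U) s : (0 <= γ < 1)%R ->
  Abs P pi X `<=` U -> Abs P pi X s -> V γ U s = ((1 - γ)^-1)%:E.
Proof.
move=> hg sub hs; rewrite -geo //; apply: eq_eseriesr => t _.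
by rewrite (iter_Abs mX mU sub t s hs) mule1.
Qed.

End S1.

Theorem theorem1 (R : realType) (dS dA : measure_display)
  (S : measurableType dS) (Act : measurableType dA)
  (P : R.-pker (S * Act) ~> S) (mu : probability S R)
  (pi : R.-pker S ~> Act)
  (r : S * Act * S -> R) (gamma : R)
  (A B I : set S)
  (hr_meas : measurable_fun setT r)
  (hr_bdd : exists M : R, forall x, (`|r x| <= M)%R)
  (hgamma : (0 < gamma < 1)%R)
  (mI : measurable I) (mA : measurable A) (mB : measurable B)
  (mU : measurable (B `|` Abs P pi (~` (A `|` B))))
  (* 1. invariant *)
  (hIabs : forall s, I s -> Pr1 P pi I s = 1)
  (hmuI : mu I = 1)
  (* 2. almost-sure reachability *)
  (hreach : forall s, I s ->
     Pr_hit_finite P pi (B `|` Abs P pi (~` (A `|` B))) s = 1)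
  (* 3. uniform bound on expected hitting time *)
  (hH : exists Hbar : R, forall s, ((A `\` B) `&` I) s ->
     E_hittime P pi (B `|` Abs P pi (~` (A `|` B))) s <= Hbar%:E)
  (* 4. reward is the indicator of U *)
  (hrU : forall s a s', r (s, a, s') = \1_(B `|` Abs P pi (~` (A `|` B))) s) :
  streett_supermartingale P pi mu A B I
    (fun s => (1 - gamma)^-1 - fine (value P pi r gamma s))%R.
Proof.
set X := ~` (A `|` B).
set U := B `|` Abs P pi X.
have mX : measurable X by apply: measurableC; exact: measurableU.
have mCU : measurable (~` U) by exact: measurableC.
have sub : Abs P pi X `<=` U by move=> s h; right.
have /andP[g0 g1] := hgamma.
have g0' : (0 <= gamma)%R by exact: ltW.
have g01 : (0 <= gamma < 1)%R by rewrite g0' g1.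
have eV : forall s, value P pi r gamma s = V P pi gamma U s.
  by move=> s; rewrite /value (osr_eq P pi _ _ hrU).
set C := (1 - gamma)^-1%R.
have C1 : (C * (1 - gamma) = 1)%R by rewrite mulVf // subr_eq0 gt_eqF.
have Vb : forall s, 0 <= V P pi gamma U s <= C%:E.
  by move=> s; rewrite V_ge0 ?V_le.
have Vfin : forall s, V P pi gamma U s = (fine (V P pi gamma U s))%:E.
  move=> s; rewrite fineK //; case/andP: (Vb s) => a b.
  by rewrite ge0_fin_numE // (le_lt_trans b) // ltey.
set v := fun s => fine (V P pi gamma U s).
have vb : forall s, (0 <= v s <= C)%R.
  by move=> s; case/andP: (Vb s); rewrite Vfin !lee_fin => -> ->.
have mV := V_meas P pi gamma mU g0'.
have TVb : forall s, 0 <= T P pi (V P pi gamma U) s <= C%:E.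
  move=> s; rewrite T_ge0; last by move=> y; case/andP: (Vb y).
  rewrite -[leRHS](T_cst P pi C%:E s); apply: T_le => //.
  - by move=> y; case/andP: (Vb y).
  - by move=> y; case/andP: (Vb y).
set tv := fun s => fine (T P pi (V P pi gamma U) s).
have TVfin : forall s, T P pi (V P pi gamma U) s = (tv s)%:E.
  move=> s; rewrite fineK //; case/andP: (TVb s) => a b.
  by rewrite ge0_fin_numE // (le_lt_trans b) // ltey.
have tv0 : forall s, (0 <= tv s)%R.
  by move=> s; case/andP: (TVb s); rewrite TVfin lee_fin => ->.
have veq : forall s, (v s = \1_U s + gamma * tv s)%R.
  move=> s; apply: EFin_inj; rewrite -Vfin EFinD EFinM -TVfin.
  exact: V_eq.
have key : forall s, stepE P pi I
    (fun y => ((1 - gamma)^-1 - fine (value P pi r gamma y))%R%:E) s <= (C - tv s)%:E.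
  move=> s.
  set f := fun y => C%:E - V P pi gamma U y.
  have ef : (fun y => ((1 - gamma)^-1 - fine (value P pi r gamma y))%R%:E) = f.
    by apply/funext => y; rewrite /f eV [in RHS]Vfin.
  have f0 : forall y, 0 <= f y.
    by move=> y; rewrite /f sube_ge0 ?orbT //; case/andP: (Vb y).
  have mf : measurable_fun setT f by apply: emeasurable_funB.
  have mfI : measurable_fun setT (f \_ I).
    by apply/(measurable_restrictT _ mI); exact: measurable_funS mf.
  have fI0 : forall y, 0 <= (f \_ I) y.
    by move=> y; rewrite patchE; case: ifP.
  rewrite ef.
  have -> : stepE P pi I f s = stepE P pi setT (f \_ I) s.
    by rewrite /stepE; apply: eq_integral => a _; rewrite integral_mkcond.
  rewrite stepE_T //.
  apply: (@le_trans _ _ (T P pi f s)).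
    apply: T_le => // y; rewrite patchE; case: ifP => // _; exact: f0.
  have e := T_add P pi f _ s f0 mf (fun y => proj1 (andP (Vb y))) mV.
  rewrite (_ : (fun y => f y + V P pi gamma U y) = fun=> C%:E) in e; last first.
    by apply/funext => y; rewrite /f subeK // Vfin.
  rewrite T_cst TVfin in e.
  have -> : T P pi f s = C%:E - (tv s)%:E.
    by rewrite e addeK.
  by [].
split.
- move=> s _; rewrite eV -/(v s) subr_ge0; by case/andP: (vb s).
- exact: hmuI.
- exact: hIabs.
- case: hH => H hH.
  set N := Num.Def.trunc (2 * H)%R.
  have HN : (2 * H < N.+1%:R)%R by exact: truncnS_gt.
  set δ := (gamma ^+ N / 2)%R.
  have δ0 : (0 < δ)%R by rewrite divr_gt0 // exprn_gt0.
  exists (δ * (1 - gamma))%R; split; first by rewrite mulr_gt0 // subr_gt0.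
  move=> s [[sA sB] sI].
  have sU : ~ U s.
    case=> [//|hA].
    have := (AbsP P pi mX s).1 hA 0%N.
    rewrite /= indicE memNset; last by move=> c; apply: c; left.
    by case=> /eqP; rewrite eq_sym oner_eq0.
  have vt : (v s = gamma * tv s)%R by rewrite veq indicE memNset // add0r.
  have survN : (fine (survive P pi (~` U) N s) * N.+1%:R <= H)%R.
    rewrite -lee_fin; apply: le_trans (hH s (conj (conj sA sB) sI)).
    rewrite /E_hittime.
    apply: le_trans (nneseries_lim_ge (P := xpredT) (m := 0%N) N.+1 _); last first.
      by move=> n _ _; exact: surv_ge0.
    apply: (@le_trans _ _ (\sum_(0 <= n < N.+1) survive P pi (~` U) N s)).
      rewrite (eq_bigr (fun=> (fine (survive P pi (~` U) N s))%:E)); last first.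
        by move=> i _; rewrite fineK // (surv_fin P pi mCU).
      by rewrite sumEFin lee_fin sumr_const_nat subn0 mulr_natr.
    rewrite big_nat_cond [leRHS]big_nat_cond; apply: lee_sum => i /andP[/andP[_ hi] _].
    by apply: surv_anti.
  set c := fine (survive P pi (~` U) N s) in survN.
  have cE : survive P pi (~` U) N s = c%:E by rewrite fineK // (surv_fin P pi mCU).
  have c0 : (0 <= c)%R by rewrite -lee_fin -cE (surv_ge0 P pi mCU).
  have hitN : hit P pi U N s = (1 - c)%:E.
    have [_ _ h] := hit_prop P pi mU N.
    by rewrite EFinB -cE -(h s) addeK // (surv_fin P pi mCU).
  have c2 : (2 * c < 1)%R.
    have : (0 < N.+1%:R :> R)%R by rewrite ltr0n.
    nra.
  have vδ : (δ <= v s)%R.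
    have hh : (gamma ^+ N)%:E * hit P pi U N s <= V P pi gamma U s.
      by apply: (V_ge_hit P pi gamma mU); rewrite g0' ltW.
    rewrite hitN Vfin -EFinM lee_fin in hh.
    have gN : (0 < gamma ^+ N)%R by rewrite exprn_gt0.
    rewrite /δ; move: hh gN; rewrite -/(v s); move: (gamma ^+ N)%R => gN hh gN0.
    nra.
  apply: le_trans (key s) _; rewrite lee_fin eV -/(v s) -/C.
  have t0 := tv0 s; have tvd : (δ <= tv s)%R by nra.
  nra.
- move=> s [sI nAB].
  apply: le_trans (key s) _; rewrite lee_fin eV -/(v s) -/C.
  have t0 := tv0 s.
  case: (pselect (U s)) => hU.
    have hAbs : Abs P pi X s.
      by case: hU => // hB; exfalso; apply: nAB; right.
    have vC : v s = C by rewrite /v (V_Abs P pi gamma mX mU s g01 sub hAbs).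
    have e := veq s; rewrite indicE mem_set //= vC in e.
    rewrite vC; nra.
  rewrite veq indicE memNset // add0r; nra.
Qed.
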